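(* For all $n\ge1$, $k\ge1$ and every $\pi\in\mathbf{C}(n,k)$, the list $\mathcal{C}(\pi)$ contains every element of $\mathbf{C}(n,k)$ exactly once (so it has length $k^n n!$), each entry after the first is obtained from the preceding entry by a flip, and the first entry is obtained from the last entry by a flip of length $n$ (i.e. if $L$ is the last entry then $\mathrm{flip}_n(L)=\pi$).
   Context: Fix integers $n\ge1$, $k\ge1$. A $k$-coloured permutation of $\{1,\dots,n\}$ is a sequence $\pi=p_1p_2\cdots p_n$ with $p_i=v_i^{c_i}$, where $v_1\cdots v_n$ is a permutation of $\{1,\dots,n\}$ and each $c_i\in\{0,\dots,k-1\}$; the set of these is $\mathbf{C}(n,k)$. A pre-perm is a prefix $p_1\cdots p_j$ ($1\le j\le n$) of some element of $\mathbf{C}(n,k)$. For $p=v^c$ and integer $s$, $p^{+s}=v^{(c+s)\bmod k}$; for $\mathbf{p}=p_1\cdots p_j$, $\mathbf{p}^{+s}=p_1^{+s}\cdots p_j^{+s}$. For $1\le i\le n$, $\mathrm{flip}_i(p_1\cdots p_n)=p_i^{+1}p_{i-1}^{+1}\cdots p_1^{+1}p_{i+1}\cdots p_n$. For a pre-perm $\mathbf{p}$ of length $j$, $\rho(\mathbf{p})=r_1\cdots r_m$ ($m=kj$) is the concatenation $\mathbf{p}^{+(k-1)}\mathbf{p}^{+(k-2)}\cdots\mathbf{p}^{+0}$ viewed circularly (indices mod $m$), and $\rho(\mathbf{p})_i=r_{i-j+1}\cdots r_{i-1}$ (length $j-1$, indices mod $m$). The list $\mathcal{C}(\mathbf{p})$: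 if $j=1$, $\mathcal{C}(p_1)=p_1^{+0},p_1^{+1},\dots,p_1^{+(k-1)}$; if $j\ge2$, $\mathcal{C}(\mathbf{p})$ is the concatenation for $i=m,m-1,\dots,1$ of the lists obtained from $\mathcal{C}(\rho(\mathbf{p})_i)$ by appending $r_i$ to every entry. *)

(* Defs.v *)
From mathcomp Require Import all_boot.
Set Implicit Arguments. Unset Strict Implicit. Unset Printing Implicit Defensive.

(* A coloured symbol v^c is the pair (v, c) : nat * nat. *)
Definition csym := (nat * nat)%type.

Definition is_cperm (n k : nat) (s : seq csym) : bool :=
  [&& size s == n, perm_eq (map fst s) (iota 1 n) & all (fun p => p.2 < k) s].

Definition cshift (k s : nat) (p : csym) : csym := (p.1, (p.2 + s) %% k).
Definition sshift (k s : nat) (w : seq csym) : seq csym := map (cshift k s) w.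

Definition flip (k i : nat) (w : seq csym) : seq csym :=
  rev (sshift k 1 (take i w)) ++ drop i w.

Definition rho (k : nat) (p : seq csym) : seq csym :=
  flatten [seq sshift k (k.-1 - t) p | t <- iota 0 k].

(* r_i (1-indexed, indices mod m) *)
Definition rho_at (k : nat) (p : seq csym) (i : nat) : csym :=
  let m := k * size p in nth (0, 0) (rho k p) ((i + m - 1) %% m).

(* rho(p)_i = r_{i-j+1} ... r_{i-1}, length j-1, indices mod m *)
Definition rho_sub (k : nat) (p : seq csym) (i : nat) : seq csym :=
  let j := size p in let m := k * j in
  [seq nth (0, 0) (rho k p) ((i + d + m - j) %% m) | d <- iota 0 j.-1].

Fixpoint Clist (k j : nat) (p : seq csym) : seq (seq csym) :=
  match j with
  | 0 => [::]
  | 1 => [seq [:: cshift k s (head (0, 0) p)] | s <- iota 0 k]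
  | j'.+1 =>
      flatten [seq map (fun q => rcons q (rho_at k p i)) (Clist k j' (rho_sub k p i))
              | i <- rev (iota 1 (k * j))]
  end.

Definition CC (k : nat) (p : seq csym) : seq (seq csym) := Clist k (size p) p.

(* Main.v *)
Require Import Defs.
From mathcomp Require Import all_boot zify.

Lemma nth_flat_iota (T : Type) (d : T) (f : nat -> seq T) j K a x :
  (forall t, size (f t) = j) -> x < K * j ->
  nth d (flatten [seq f t | t <- iota a K]) x = nth d (f (a + x %/ j)) (x %% j).
Proof.
move=> Hs; elim: K a x => [|K IH] a x; first by rewrite mul0n.
move=> Hx /=; have j0 : 0 < j by rewrite lt0n; apply: contraTneq Hx => ->; rewrite muln0.
rewrite nth_cat Hs; case: ltnP => Hxj.
  by rewrite divn_small // modn_small // addn0.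
rewrite IH; last by move: Hx; rewrite mulSn; lia.
have E : x = 1 * j + (x - j) by lia.
have -> : x %/ j = 1 + (x - j) %/ j by rewrite {1}E divnMDl.
have -> : x %% j = (x - j) %% j by rewrite {1}E modnMDl.
by rewrite addnA addn1.
Qed.

Lemma sumn_const (T : Type) (s : seq T) c : sumn [seq c | _ <- s] = size s * c.
Proof. by elim: s => //= _ s ->; rewrite mulSn. Qed.

Lemma size_rho k p : size (rho k p) = k * size p.
Proof.
rewrite /rho size_flatten /shape -map_comp.
rewrite (eq_map (g := fun _ => size p)) ?sumn_const ?size_iota //.
by move=> t; rewrite /= size_map.
Qed.

Section R.
Variables (k : nat) (p : seq csym).
Hypothesis k0 : 0 < k.
Hypothesis j0 : 0 < size p.
Local Notation j := (size p).
Local Notation m := (k * size p).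

Definition R x := nth (0,0) (rho k p) (x %% m).

Lemma nth_rho x : x < m ->
  nth (0,0) (rho k p) x = cshift k (k.-1 - x %/ j) (nth (0,0) p (x %% j)).
Proof.
move=> Hx; rewrite /rho (@nth_flat_iota _ _ _ (size p)) //.
  by rewrite add0n /sshift (nth_map (0,0)) // ltn_pmod.
by move=> t; rewrite size_map.
Qed.

Lemma m0 : 0 < m. Proof. by rewrite muln_gt0 k0 j0. Qed.

Lemma RE x : R x = cshift k (k.-1 - (x %/ j) %% k) (nth (0,0) p (x %% j)).
Proof.
rewrite /R nth_rho ?ltn_pmod ?m0 //.
rewrite divn_modl ?dvdn_mull // mulnK // modn_dvdm // dvdn_mull //.
Qed.

Lemma R_fst x : (R x).1 = (nth (0,0) p (x %% j)).1.
Proof. by rewrite RE. Qed.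

Lemma R_col x : (R x).2 < k.
Proof. by rewrite RE /= ltn_pmod. Qed.

Lemma R_per x : R (x + m) = R x.
Proof. by rewrite /R modnDr. Qed.

Lemma R_shift y : R y = cshift k 1 (R (y + j)).
Proof.
rewrite !RE /cshift /= modnDr; congr (_, _).
rewrite divnDr // divnn j0 modnDml.
set a := y %/ j; set c := (nth (0,0) p (y %% j)).2.
rewrite -[(a + true) %% k]modnDml.
have : a %% k < k by rewrite ltn_pmod.
move: (a %% k) => b Hb.
case: (ltnP b.+1 k) => Hb1.
  rewrite (modn_small (m:=b+true)); last by lia.
  congr (_ %% k); lia.
have -> : b + true = k by lia.
rewrite modnn subn0 -addnA.
have -> : k.-1 + 1 = k by lia.
rewrite modnDr; have -> : k.-1 - b = 0 by lia.
by rewrite addn0.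
Qed.

Lemma R_init d : all (fun x => x.2 < k) p -> d < j -> R (m - j + d) = nth (0,0) p d.
Proof.
move=> Hc Hd; rewrite RE.
have -> : m - j + d = k.-1 * j + d.
  by rewrite -[in m](prednK k0) mulSn addKn.
rewrite divnMDl // divn_small // addn0 modn_small; last by lia.
rewrite modnMDl modn_small // subnn /cshift addn0 modn_small.
  by case: (nth _ _ _).
by move/allP: Hc; apply; apply: mem_nth.
Qed.

Lemma R_inj x y : uniq (map fst p) -> x < m -> y < m -> R x = R y -> x = y.
Proof.
move=> Hu Hx Hy; rewrite /R !modn_small // !nth_rho // /cshift.
case=> Hf Hc.
have Hr : x %% j = y %% j.
  apply/eqP; rewrite -(nth_uniq 0 _ _ Hu) ?size_map ?ltn_pmod //.
  by rewrite !(nth_map (0,0)) ?ltn_pmod // Hf.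
move: Hc; rewrite Hr => /eqP; rewrite eqn_modDl.
have Hx' : x %/ j < k by rewrite ltn_divLR.
have Hy' : y %/ j < k by rewrite ltn_divLR.
move=> Hd.
have Hq : x %/ j = y %/ j.
  move: Hd Hx' Hy'.
  generalize (x %/ j) (y %/ j) => a b Hd Ha Hb.
  have Ea : (k.-1 - a) %% k = k.-1 - a by apply: modn_small; lia.
  have Eb : (k.-1 - b) %% k = k.-1 - b by apply: modn_small; lia.
  move: Hd; rewrite Ea Eb => /eqP; lia.
by rewrite (divn_eq x j) (divn_eq y j) Hq Hr.
Qed.

Lemma R_surj x : x.1 \in map fst p -> x.2 < k -> all (fun x => x.2 < k) p ->
  exists2 y, y < m & R y = x.
Proof.
move=> /mapP [z Hz Hxz] Hx2 Hc.
set r := index z p.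
have Hr : r < j by rewrite index_mem.
set c := z.2.
have Hck : c < k by move/allP: Hc; apply.
set a := (c + k.-1 - x.2) %% k.
have Ha : a < k by rewrite ltn_pmod.
exists (a * j + r).
  apply: (leq_trans (n := a.+1 * j)); first by rewrite mulSn [j + _]addnC ltn_add2l.
  by rewrite leq_mul2r Ha orbT.
rewrite RE divnMDl // divn_small // addn0 modn_small // modnMDl modn_small //.
rewrite nth_index // /cshift [RHS]surjective_pairing -Hxz; congr (_, _).
have H1 : c + (k.-1 - a) + a = c + k.-1 by lia.
rewrite -[RHS](modn_small Hx2); apply/eqP; rewrite -(eqn_modDr a) H1 /a modnDmr.
by rewrite subnKC //; lia.
Qed.


Lemma mJ : size p <= m.
Proof. by rewrite leq_pmull. Qed.

Definition win x0 := [seq R (x0 + d) | d <- iota 0 j].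

Lemma iota_last n : 0 < n -> iota 0 n = rcons (iota 0 n.-1) n.-1.
Proof. by move=> n0; rewrite -{1}(prednK n0) -addn1 iotaD add0n cats1. Qed.

Lemma iota_first n : 0 < n -> iota 0 n = 0 :: map S (iota 0 n.-1).
Proof.
move=> n0; rewrite -{1}(prednK n0) /=; congr (_ :: _).
by rewrite -[1]/(1+0) iotaDl; apply: eq_map => x; rewrite add1n.
Qed.

Lemma win_W i : rcons (rho_sub k p i) (rho_at k p i) = win (i + m - j).
Proof.
rewrite /win (iota_last _ j0) map_rcons /rho_sub /rho_at -/(R _) -/(R _).
have Hm := mJ.
congr rcons; last by congr R; lia.
by apply: eq_map => d; rewrite -/(R _); congr R; lia.
Qed.

Lemma win_K i : cshift k 1 (rho_at k p i.+1) :: rho_sub k p i.+1 = win (i + m - j).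
Proof.
rewrite /win (iota_first _ j0) /= -map_comp /rho_sub /rho_at -/(R _).
have Hm := mJ.
congr (_ :: _).
  by rewrite [R (_ + 0)]R_shift; congr (cshift _ _ (R _)); lia.
by apply: eq_map => d; rewrite /= -/(R _); congr R; lia.
Qed.

Lemma win_init : all (fun x => x.2 < k) p -> win (m - j) = p.
Proof.
move=> Hc; rewrite /win -[RHS](mkseq_nth (0,0)) /mkseq.
by apply/eq_in_map => d; rewrite mem_iota add0n => /andP [_ Hd]; rewrite R_init.
Qed.

Lemma win_per x : win (x + m) = win x.
Proof. by apply: eq_map => d; rewrite addnAC R_per. Qed.

Lemma win_fst x0 : perm_eq (map fst (win x0)) (map fst p).
Proof.
have -> : map fst (win x0) =
   map (fun r => (nth (0,0) p r).1) (map (fun d => (x0 + d) %% j) (iota 0 j)).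
  by rewrite -!map_comp; apply: eq_map => d; rewrite /= R_fst.
have -> : map fst p = map (fun r => (nth (0,0) p r).1) (iota 0 j).
  by rewrite -{1}(mkseq_nth (0,0) p) /mkseq -map_comp.
apply: perm_map.
have Hu : uniq (map (fun d => (x0 + d) %% j) (iota 0 j)).
  rewrite map_inj_in_uniq ?iota_uniq // => d1 d2.
  rewrite !mem_iota !add0n => /andP [_ H1] /andP [_ H2] /eqP.
  by rewrite eqn_modDl !modn_small // => /eqP.
apply: uniq_perm => //; first exact: iota_uniq.
have Hs : {subset map (fun d => (x0 + d) %% j) (iota 0 j) <= iota 0 j}.
  by move=> r /mapP [d _ ->]; rewrite mem_iota add0n ltn_pmod.
have Hsz : size (iota 0 j) <= size (map (fun d => (x0 + d) %% j) (iota 0 j)).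
  by rewrite size_map.
by case: (uniq_min_size Hu Hs Hsz).
Qed.

End R.

Section G.
Variables (T : eqType) (F : nat -> seq T).
Definition G N := flatten [seq F i | i <- rev (iota 1 N)].

Lemma GS N : G N.+1 = F N.+1 ++ G N.
Proof. by rewrite /G -[N.+1]addn1 iotaD rev_cat /= addnC. Qed.

Lemma Gmem N x : x \in G N <-> exists2 i, 0 < i <= N & x \in F i.
Proof.
elim: N => [|N IH]; first by split=> //; case=> i; lia.
rewrite GS mem_cat; split.
  case/orP=> [H|/IH [i Hi H]]; first by exists N.+1 => //; lia.
  by exists i => //; lia.
case=> i Hi H; case: (ltnP i N.+1) => Hi'.
  by apply/orP; right; apply/IH; exists i => //; lia.
have E : N.+1 = i by lia.
by rewrite E H.
Qed.

Lemma Gsize c N : (forall i, size (F i) = c) -> size (G N) = N * c.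
Proof. by move=> Hs; elim: N => // N IH; rewrite GS size_cat IH Hs mulSn. Qed.

Lemma Guniq N : (forall i, 0 < i <= N -> uniq (F i)) ->
  (forall i i' x, 0 < i <= N -> 0 < i' <= N -> x \in F i -> x \in F i' -> i = i') ->
  uniq (G N).
Proof.
elim: N => [|N IH] Hu Hd; first by [].
rewrite GS cat_uniq Hu ?IH //=; try lia.
  rewrite andbT; apply/negP => /hasP [x Hx1 Hx2].
  move/Gmem: Hx1 => [i Hi Hxi].
  have := Hd N.+1 i x; lia.
- by move=> i Hi; apply: Hu; lia.
- by move=> i i' x Hi Hi'; apply: Hd; lia.
Qed.

Lemma last_ne (s : seq T) x y : s != [::] -> last x s = last y s.
Proof. by case: s. Qed.

Lemma Gsorted (d : T) (e : rel T) N : 0 < N -> (forall i, 0 < i <= N -> F i != [::]) ->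
  (forall i, 0 < i <= N -> sorted e (F i)) ->
  (forall i, 0 < i < N -> e (last d (F i.+1)) (head d (F i))) ->
  [/\ sorted e (G N), head d (G N) = head d (F N) & last d (G N) = last d (F 1)].
Proof.
elim: N => [|N IH] // _ Hn Hs He.
case: N IH Hn Hs He => [|N] IH Hn Hs He.
  by rewrite GS /G /= cats0; split => //; apply: Hs.
have [S1 H1 L1] : [/\ sorted e (G N.+1), head d (G N.+1) = head d (F N.+1)
                  & last d (G N.+1) = last d (F 1)].
  apply: IH => //.
  - by move=> i Hi; apply: Hn; lia.
  - by move=> i Hi; apply: Hs; lia.
  - by move=> i Hi; apply: He; lia.
have NG : G N.+1 != [::].
  have H : 0 < N.+1 <= N.+2 by lia.
  by rewrite GS; move: (Hn _ H); case: (F N.+1).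
rewrite GS; split.
- have H2 : 0 < N.+2 <= N.+2 by lia.
  have H3 : 0 < N.+1 < N.+2 by lia.
  move: (He _ H3) (Hs _ H2) (Hn _ H2).
  case: (F N.+2) => [|a t] // He' Hs' _.
  rewrite /= cat_path; move: Hs'; rewrite /= => ->.
  move: S1 H1 NG He'; case: (G N.+1) => [|b u] //= -> <- _.
  by rewrite andbT.
- have H2 : 0 < N.+2 <= N.+2 by lia.
  by move: (Hn _ H2); case: (F N.+2).
- by rewrite last_cat -L1; apply: last_ne.
Qed.
End G.

Lemma flip_rcons k t (a : seq csym) r : t <= size a ->
  flip k t (rcons a r) = rcons (flip k t a) r.
Proof.
move=> Ht; rewrite /flip -cats1 takel_cat // cats1 drop_rcons //.
by rewrite -rcons_cat.
Qed.

Lemma flip_full k (a : seq csym) r :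
  flip k (size a).+1 (rcons a r) = cshift k 1 r :: flip k (size a) a.
Proof.
rewrite /flip take_oversize ?size_rcons // drop_oversize ?size_rcons //.
by rewrite take_size drop_size !cats0 /sshift map_rcons rev_rcons.
Qed.

Definition arr k (p s : seq csym) :=
  perm_eq (map fst s) (map fst p) && all (fun x : csym => x.2 < k) s.
Definition er k J (a b : seq csym) := has (fun t => b == flip k t a) (iota 1 J).

Lemma rho_atE k p i : rho_at k p i = R k p (i + k * size p - 1).
Proof. by []. Qed.

Lemma head_map_ne (T U : Type) (f : T -> U) (s : seq T) d d' :
  0 < size s -> head d' (map f s) = f (head d s).
Proof. by case: s. Qed.

Lemma last_map_ne (T U : Type) (f : T -> U) (s : seq T) d d' :
  0 < size s -> last d' (map f s) = f (last d s).
Proof. by case: s => //= x s _; rewrite last_map. Qed.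

Lemma path_iota (r : rel nat) a n : (forall b, r b b.+1) -> path r a (iota a.+1 n).
Proof. by move=> H; elim: n a => //= n IH a; rewrite H IH. Qed.

Lemma main k j : 0 < k -> forall p, size p = j.+1 -> uniq (map fst p) ->
  all (fun x : csym => x.2 < k) p ->
  let C := Clist k j.+1 p in
  [/\ uniq C, forall s, (s \in C) = arr k p s, size C = k ^ j.+1 * j.+1`!,
      sorted (er k j.+1) C & head [::] C = p /\ flip k j.+1 (last [::] C) = p].
Proof.
move=> k0; elim: j => [|j IH] p Hs Hu Hc.
  case: p Hs Hu Hc => [|x [|y p]] //= _ _; rewrite andbT => Hx.
  have Hi : iota 0 k = 0 :: iota 1 k.-1 by rewrite -{1}(prednK k0).
  split.
  - rewrite map_inj_in_uniq ?iota_uniq // => s1 s2.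
    rewrite !mem_iota !add0n => /andP [_ H1] /andP [_ H2] [] /eqP.
    by rewrite eqn_modDl !modn_small // => /eqP.
  - move=> s; apply/idP/idP.
      move=> /mapP [t _ ->]; rewrite /arr /= perm_refl /= andbT ltn_pmod //.
    move=> /andP [Hp Hcs].
    have := perm_size Hp; rewrite !size_map /=.
    case: s Hp Hcs => [|z [|]] // Hp Hcs _.
    have Hz : z.1 = x.1.
      by have := perm_mem Hp z.1; rewrite /= !inE eqxx => /esym /eqP.
    have Hz2 : z.2 < k by move: Hcs => /= /andP [].
    apply/mapP; exists ((z.2 + k - x.2) %% k).
      by rewrite mem_iota add0n ltn_pmod.
    rewrite /cshift modnDmr subnKC; last by lia.
    by rewrite modnDr modn_small // -Hz -surjective_pairing.
  - by rewrite size_map size_iota expn1 muln1.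
  - rewrite sorted_map Hi /=; apply: path_iota => b.
    rewrite /er /= orbF /flip /= /cshift /= modnDml addnS addn1.
    by apply/eqP.
  - split; first by rewrite Hi /= /cshift addn0 modn_small //; case: x Hx.
    rewrite (iota_last _ k0) map_rcons last_rcons /flip /= /cshift /=.
    rewrite modnDml -addnA addn1 prednK // modnDr modn_small //.
    by case: x Hx.
have j0 : 0 < size p by rewrite Hs.
set J := j.+2; set m := k * J.
have mE : k * size p = m by rewrite Hs.
have mJ' : J <= m by rewrite /m leq_pmull.
pose F := fun i => map (fun q => rcons q (rho_at k p i)) (Clist k j.+1 (rho_sub k p i)).
have -> : Clist k J p = G _ F m by [].
have Hsub i : size (rho_sub k p i) = j.+1 by rewrite /rho_sub size_map size_iota Hs.
have HW i : perm_eq (map fst (rcons (rho_sub k p i) (rho_at k p i))) (map fst p).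
  by rewrite (win_W k p k0 j0) win_fst.
have HR i : all (fun x : csym => x.2 < k) (rcons (rho_sub k p i) (rho_at k p i)).
  rewrite (win_W k p k0 j0); apply/allP => y /mapP [d _ ->]; exact: R_col.
have Huq i : uniq (map fst (rho_sub k p i)).
  by have := perm_uniq (HW i); rewrite Hu map_rcons rcons_uniq => /andP [].
have Hcol i : all (fun x : csym => x.2 < k) (rho_sub k p i).
  by have := HR i; rewrite all_rcons => /andP [].
have Hcat i : (rho_at k p i).2 < k.
  by have := HR i; rewrite all_rcons => /andP [].
have IHi i := IH (rho_sub k p i) (Hsub i) (Huq i) (Hcol i).
have Hszq i q : q \in Clist k j.+1 (rho_sub k p i) -> size q = j.+1.
  have [_ Hm _ _ _] := IHi i.
  rewrite Hm => /andP [/perm_size]; rewrite !size_map => ->.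
  by rewrite size_iota Hs.
have Hne i : 0 < size (Clist k j.+1 (rho_sub k p i)).
  have [_ _ _ _ [Hh _]] := IHi i.
  move: Hh; case: (Clist _ _ _) => //= Hh.
  by have := Hsub i; rewrite -Hh.
have Hra i : 0 < i <= m -> rho_at k p i = R k p (i.-1).
  move=> Hi; rewrite rho_atE mE.
  have -> : i + m - 1 = i.-1 + m by lia.
  by rewrite -mE R_per.
have HFn i : 0 < i <= m -> F i != [::].
  by move=> _; rewrite /F -size_eq0 size_map -lt0n Hne.
have HFs i : 0 < i <= m -> sorted (er k J) (F i).
  move=> _; rewrite /F sorted_map.
  have [_ _ _ Hso _] := IHi i.
  apply: (sub_in_sorted (P := fun q => size q == j.+1)) Hso; last first.
    by apply/allP => q Hq; rewrite /= (Hszq i q Hq).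
  move=> q1 q2 /eqP H1 _ /hasP [t Ht /eqP ->].
  apply/hasP; exists t; first by move: Ht; rewrite !mem_iota; lia.
  by rewrite /= flip_rcons // H1; move: Ht; rewrite mem_iota; lia.
have HFl i : 0 < i < m -> er k J (last [::] (F i.+1)) (head [::] (F i)).
  move=> Hi; rewrite /F (last_map_ne _ _ _ _ [::]) // (head_map_ne _ _ _ _ [::]) //.
  have [_ _ _ _ [-> _]] := IHi i.
  have [_ _ _ _ [_ Hf]] := IHi i.+1.
  have Hsz : size (last [::] (Clist k j.+1 (rho_sub k p i.+1))) = j.+1.
    apply: (Hszq i.+1); move: (Hne i.+1); case: (Clist _ _ _) => // a t _.
    by rewrite /= mem_last.
  apply/hasP; exists J; first by rewrite mem_iota; lia.
  have := flip_full k (last [::] (Clist k j.+1 (rho_sub k p i.+1))) (rho_at k p i.+1).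
  rewrite Hsz => ->.
  by rewrite Hf (win_K k p k0 j0 i) (win_W k p k0 j0) mE.
split.
- apply: Guniq.
    move=> i _; rewrite /F map_inj_uniq; first by have [] := IHi i.
    exact: rcons_injl.
  move=> i i' x Hi Hi' /mapP [q _ ->] /mapP [q' _] /rcons_inj [_].
  rewrite (Hra _ Hi) (Hra _ Hi') => /(R_inj k p k0 j0) H.
  rewrite mE in H; have := H Hu; lia.
- move=> s; apply/idP/idP.
    move/Gmem => [i Hi /mapP [q Hq ->]].
    have [_ Hm _ _ _] := IHi i.
    move: Hq; rewrite Hm => /andP [Hq1 Hq2].
    apply/andP; split; last by rewrite all_rcons Hcat.
    apply: perm_trans (HW i).
    by rewrite !map_rcons perm_rcons perm_sym perm_rcons perm_cons perm_sym.
  move=> /andP [Hp Hcs].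
  have := perm_size Hp; rewrite !size_map Hs.
  case/lastP: s Hp Hcs => [|q x] // Hp Hcs _.
  have Hx1 : x.1 \in map fst p by rewrite -(perm_mem Hp) map_rcons mem_rcons inE eqxx.
  have Hx2 : x.2 < k by move: Hcs; rewrite all_rcons => /andP [].
  have [y Hy Ry] := R_surj k p k0 j0 x Hx1 Hx2 Hc.
  rewrite mE in Hy.
  have Hi : 0 < y.+1 <= m by lia.
  have Ea : rho_at k p y.+1 = x by rewrite (Hra _ Hi).
  apply/Gmem; exists y.+1 => //; apply/mapP; exists q; last by rewrite Ea.
  have [_ Hm _ _ _] := IHi y.+1.
  rewrite Hm; apply/andP; split; last by move: Hcs; rewrite all_rcons => /andP [].
  have := HW y.+1; rewrite Ea map_rcons perm_rcons => H2.
  move: Hp; rewrite map_rcons perm_rcons => H1.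
  by rewrite -(perm_cons x.1); apply: perm_trans H1 _; rewrite perm_sym.
- rewrite (Gsize _ F (k ^ j.+1 * j.+1`!)).
    by rewrite /m /J [k ^ j.+2]expnS [j.+2`!]factS -!mulnA; congr (k * _); rewrite mulnCA.
  by move=> i; rewrite size_map; have [] := IHi i.
- have Hm0 : 0 < m by rewrite /m muln_gt0 k0.
  have [S _ _] := Gsorted _ F [::] (er k J) m Hm0 HFn HFs HFl.
  exact: S.
- have Hm0 : 0 < m by rewrite /m muln_gt0 k0.
  have [_ Hh Hl] := Gsorted _ F [::] (er k J) m Hm0 HFn HFs HFl.
  rewrite Hh Hl; split.
    rewrite /F (head_map_ne _ _ _ _ [::]) //.
    have [_ _ _ _ [-> _]] := IHi m.
    rewrite (win_W k p k0 j0) mE.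
    have -> : m + m - size p = (m - size p) + m by rewrite Hs; lia.
    by rewrite -mE win_per win_init.
  rewrite /F (last_map_ne _ _ _ _ [::]) //.
  have [_ _ _ _ [_ Hf]] := IHi 1.
  have Hsz : size (last [::] (Clist k j.+1 (rho_sub k p 1))) = j.+1.
    apply: (Hszq 1); move: (Hne 1); case: (Clist _ _ _) => // a t _.
    by rewrite /= mem_last.
  have := flip_full k (last [::] (Clist k j.+1 (rho_sub k p 1))) (rho_at k p 1).
  rewrite Hsz => ->.
  rewrite Hf (win_K k p k0 j0 0) add0n.
  by rewrite win_init.
Qed.

Theorem theorem3 (n k : nat) (pi : seq csym) :
  1 <= n -> 1 <= k -> is_cperm n k pi ->
  let L := CC k pi in
  [/\ uniq L,
      (forall s, is_cperm n k s <-> s \in L),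
      size L = k ^ n * n`!,
      (forall i, i.+1 < size L ->
         exists2 t, 1 <= t <= n & nth [::] L i.+1 = flip k t (nth [::] L i))
    & head [::] L = pi /\ flip k n (last [::] L) = pi].
Proof.
move=> n1 k1 Hpi L.
move: Hpi => /and3P [/eqP Hsz Hperm Hcol].
have Hu : uniq (map fst pi) by rewrite (perm_uniq Hperm) iota_uniq.
have [j Hj] : exists j, n = j.+1 by exists n.-1; lia.
rewrite Hj in Hsz Hperm *.
have [U M S So [H F]] := main k j k1 pi Hsz Hu Hcol.
rewrite /L /CC Hsz; split => //.
- move=> s; rewrite M /arr /is_cperm; split.
    move=> /and3P [_ Hp ->]; rewrite andbT.
    by apply: perm_trans Hp _; rewrite perm_sym.
  move=> /andP [Hp ->]; rewrite andbT.
  have Hp' := perm_trans Hp Hperm; rewrite Hp' andbT.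
  by have := perm_size Hp'; rewrite size_map size_iota => ->.
- move: So; case: (Clist k j.+1 pi) => [|x t] //= /(pathP [::]) Hp i Hi.
  have := Hp i Hi; case/hasP => u; rewrite mem_iota => Hu' /eqP ->.
  by exists u => //; lia.
Qed.
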